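(* Let $m\in\mathbb{N}$, $m\geq2$, and $T:[0,1)\to[0,1)$, $T(x)=mx\bmod 1$. Let $0\le a<b\le 1$ so that $(a,b)\subset[0,1)$ is a nonempty open interval (the hole), and let $$A=\{x\in[0,1): T^n(x)\notin(a,b)\text{ for all }n\geq 0\}$$ be the survival set. Then for every $t\in(0,1)$ that has a universal $m$-adic expansion, $$A-t\subset\mathbb{Q}^c,\qquad A+t\subset\mathbb{Q}^c,\qquad \frac{A}{t}\subset\mathbb{Q}^c.$$ Moreover, if $t\in(1,\infty)$ and $1/t$ has a universal $m$-adic expansion, then $tA\subset\mathbb{Q}^c$.
   Context: An $m$-adic expansion of $t\in(0,1)$ is a sequence $(t_k)\in\{0,1,\dots,m-1\}^{\mathbb{N}}$ with $t=\sum_{k\geq1}t_k m^{-k}$. Such an expansion is universal if for every $k\geq1$ and every word $x_1\cdots x_k\in\{0,\dots,m-1\}^k$ there is $k_0\in\mathbb{N}$ with $t_{k_0+1}\cdots t_{k_0+k}=x_1\cdots x_k$; $t$ has a universal $m$-adic expansion if some $m$-adic expansion of it is universal. Notation: $A\pm t=\{x\pm t:x\in A\}$, $tA=\{tx:x\in A\setminus\{0\}\}$, $\frac{A}{t}=\{t^{-1}x:x\in A\setminus\{0\}\}$. $\mathbb{Q}^c$ denotes the set of irrational real numbers. *)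

(* Defs.v *)
From Stdlib Require Import Reals Lra Lia List.
Open Scope R_scope.

Definition frac (x : R) : R := x - IZR (Int_part x).

Definition Tmap (m : nat) (x : R) : R := frac (INR m * x).

(* d is an m-adic expansion of t: digits d k = t_{k+1} in {0..m-1} and
   t = sum_{k>=0} d k / m^(k+1) *)
Definition madic_expansion (m : nat) (d : nat -> nat) (t : R) : Prop :=
  (forall k, (d k < m)%nat) /\
  infinite_sum (fun k => INR (d k) / INR m ^ (S k)) t.

Definition universal_seq (m : nat) (d : nat -> nat) : Prop :=
  forall w : list nat, (1 <= length w)%nat -> Forall (fun x => (x < m)%nat) w ->
    exists k0 : nat, forall i : nat, (i < length w)%nat -> d (k0 + i)%nat = nth i w 0%nat.

Definition has_universal_expansion (m : nat) (t : R) : Prop :=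
  exists d, madic_expansion m d t /\ universal_seq m d.

Definition rational (x : R) : Prop :=
  exists p q : Z, q <> 0%Z /\ x = IZR p / IZR q.

Definition irrational (x : R) : Prop := ~ rational x.

Definition survivor (m : nat) (a b : R) (x : R) : Prop :=
  0 <= x < 1 /\ forall n : nat, ~ (a < Nat.iter n (Tmap m) x < b).

(* Main.v *)
Require Import Defs.
From Stdlib Require Import Reals Lra Lia ZArith List Classical.
Open Scope R_scope.

Lemma Int_part_unique (r : R) (z : Z) : IZR z <= r < IZR z + 1 -> Int_part r = z.
Proof.
  intros [H1 H2]. unfold Int_part.
  assert (up r = (z+1)%Z). { symmetry. apply tech_up; rewrite plus_IZR; simpl; lra. }
  rewrite H. lia.
Qed.

Lemma frac_bounds (r : R) : 0 <= frac r < 1.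
Proof. unfold frac. destruct (base_Int_part r). lra. Qed.

Lemma frac_shift (r : R) (k : Z) : frac (r + IZR k) = frac r.
Proof.
  unfold frac. destruct (base_Int_part r) as [H1 H2].
  rewrite (Int_part_unique (r + IZR k) (Int_part r + k)).
  - rewrite plus_IZR; ring.
  - rewrite plus_IZR; lra.
Qed.

Lemma frac_small (k : Z) (w : R) : 0 <= w < 1 -> frac (IZR k + w) = w.
Proof.
  intros H. unfold frac. rewrite (Int_part_unique (IZR k + w) k); lra.
Qed.

Lemma iter_frac (m : nat) (x : R) (n : nat) : 0 <= x < 1 ->
  Nat.iter n (Tmap m) x = frac (INR m ^ n * x).
Proof.
  intros Hx. induction n as [|n IH].
  - simpl. replace (1 * x) with (IZR 0 + x) by (simpl; ring). rewrite frac_small; auto.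
  - simpl. rewrite IH. unfold Tmap. unfold frac at 2.
    replace (INR m * (INR m ^ n * x - IZR (Int_part (INR m ^ n * x))))
      with (INR m * (INR m ^ n * x) + IZR (- (Z.of_nat m * Int_part (INR m ^ n * x))))
      by (rewrite opp_IZR, mult_IZR, <- INR_IZR_INZ; ring).
    rewrite frac_shift. f_equal. ring.
Qed.

Fixpoint Nn (m : nat) (d : nat -> nat) (n : nat) : nat :=
  match n with 0 => 0%nat | S n => (m * Nn m d n + d n)%nat end.
Fixpoint Ps (m : nat) (d : nat -> nat) (K : nat) : R :=
  match K with 0 => 0 | S K => Ps m d K + INR (d K) / INR m ^ S K end.
Fixpoint Seg (m : nat) (d : nat -> nat) (n L : nat) : nat :=
  match L with 0 => 0%nat | S L => (m * Seg m d n L + d (n + L))%nat end.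

Lemma sum_Ps m d K : sum_f_R0 (fun k => INR (d k) / INR m ^ S k) K = Ps m d (S K).
Proof. induction K. simpl; ring. cbn [sum_f_R0]. rewrite IHK. cbn [Ps]. ring. Qed.

Lemma powm_pos (m : nat) n : (1 <= m)%nat -> 0 < INR m ^ n.
Proof. intros. apply pow_lt. apply lt_0_INR. lia. Qed.

Lemma N_Ps m d n : (1 <= m)%nat -> INR (Nn m d n) = INR m ^ n * Ps m d n.
Proof.
  intros Hm. induction n as [|n IH]; simpl. ring.
  rewrite plus_INR, mult_INR, IH. field.
  split; [apply Rgt_not_eq, powm_pos; auto | apply Rgt_not_eq, lt_0_INR; lia].
Qed.

Lemma Ps_incr m d n j : (1 <= m)%nat -> (forall k, (d k < m)%nat) ->
  0 <= Ps m d (n + j) - Ps m d n <= 1 / INR m ^ n - 1 / INR m ^ (n + j).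
Proof.
  intros Hm Hd. induction j as [|j IH].
  - rewrite Nat.add_0_r. lra.
  - replace (n + S j)%nat with (S (n + j)) by lia. simpl.
    assert (Hp := powm_pos m (n+j) Hm).
    assert (Hmr : 1 <= INR m) by (apply (le_INR 1); lia).
    assert (Hdk : INR (d (n+j)%nat) <= INR m - 1).
    { specialize (Hd (n+j)%nat). replace (INR m - 1) with (INR (m - 1)) by (rewrite minus_INR by lia; simpl; ring). apply le_INR. lia. }
    assert (0 <= INR (d (n + j)%nat)) by apply pos_INR.
    assert (H1 : INR (d (n + j)%nat) / (INR m * INR m ^ (n + j)) <= 1 / INR m ^ (n + j) - 1 / (INR m * INR m ^ (n + j))).
    { unfold Rdiv. rewrite Rinv_mult. 
      assert (0 < / INR m) by (apply Rinv_0_lt_compat; lra).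
      assert (0 < / INR m ^ (n+j)) by (apply Rinv_0_lt_compat; lra).
      replace (1 * / INR m ^ (n + j) - 1 * (/ INR m * / INR m ^ (n + j))) with
        ((INR m - 1) * (/ INR m * / INR m ^ (n + j))) by (field; lra).
      apply Rmult_le_compat_r. apply Rmult_le_pos; lra. lra. }
    assert (0 <= INR (d (n + j)%nat) / (INR m * INR m ^ (n + j))).
    { apply Rmult_le_pos; [lra|]. apply Rlt_le, Rinv_0_lt_compat, Rmult_lt_0_compat; lra. }
    lra.
Qed.

Lemma lim_bound (f : nat -> R) t K0 lo hi : infinite_sum f t ->
  (forall K, (K0 <= K)%nat -> lo <= sum_f_R0 f K <= hi) -> lo <= t <= hi.
Proof.
  intros Hs Hb. split.
  - destruct (Rle_or_lt lo t) as [H|H]; auto.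
    destruct (Hs (lo - t)) as [N HN]; [lra|].
    specialize (HN (max N K0) ltac:(lia)). specialize (Hb (max N K0) ltac:(lia)).
    unfold R_dist in HN. apply Rabs_def2 in HN. lra.
  - destruct (Rle_or_lt t hi) as [H|H]; auto.
    destruct (Hs (t - hi)) as [N HN]; [lra|].
    specialize (HN (max N K0) ltac:(lia)). specialize (Hb (max N K0) ltac:(lia)).
    unfold R_dist in HN. apply Rabs_def2 in HN. lra.
Qed.

Lemma tail01 m d t n : (1 <= m)%nat -> madic_expansion m d t ->
  0 <= INR m ^ n * t - INR (Nn m d n) <= 1.
Proof.
  intros Hm [Hd Hs].
  assert (Hp := powm_pos m n Hm).
  assert (H : Ps m d n <= t <= Ps m d n + 1 / INR m ^ n).
  { apply (lim_bound _ t n _ _ Hs). intros K HK. rewrite sum_Ps.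
    replace (S K) with (n + (S K - n))%nat by lia.
    pose proof (Ps_incr m d n (S K - n) Hm Hd).
    assert (0 < 1 / INR m ^ (n + (S K - n))) by (apply Rdiv_lt_0_compat; [lra| apply powm_pos; auto]).
    lra. }
  rewrite N_Ps by auto.
  split. nra.
  replace 1 with (INR m ^ n * (1 / INR m ^ n)) by (field; lra). nra.
Qed.

Lemma Nn_Seg m d n L : Nn m d (n + L) = (Nn m d n * m ^ L + Seg m d n L)%nat.
Proof.
  induction L as [|L IH]; simpl.
  - rewrite Nat.add_0_r. lia.
  - replace (n + S L)%nat with (S (n + L)) by lia. simpl. rewrite IH. nia.
Qed.

Lemma block_bound m d t n L : (1 <= m)%nat -> madic_expansion m d t ->
  INR (Seg m d n L) / INR m ^ L <= INR m ^ n * t - INR (Nn m d n)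
  <= (INR (Seg m d n L) + 1) / INR m ^ L.
Proof.
  intros Hm He.
  pose proof (tail01 m d t (n + L) Hm He) as H.
  rewrite Nn_Seg, plus_INR, mult_INR, pow_INR, pow_add in H.
  assert (Hp := powm_pos m L Hm).
  set (s := INR m ^ n * t - INR (Nn m d n)).
  assert (E : INR m ^ n * INR m ^ L * t - (INR (Nn m d n) * INR m ^ L + INR (Seg m d n L))
            = INR m ^ L * s - INR (Seg m d n L)) by (unfold s; ring).
  rewrite E in H. split.
  - apply (Rmult_le_reg_l (INR m ^ L)); auto. field_simplify; lra.
  - apply (Rmult_le_reg_l (INR m ^ L)); auto. field_simplify; lra.
Qed.

Definition encd (m L X k : nat) : nat := (X / m ^ (L - 1 - k)) mod m.

Lemma Seg_enc m d n L X : (1 <= m)%nat -> (X < m ^ L)%nat ->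
  (forall k, (k < L)%nat -> d (n + k)%nat = encd m L X k) -> Seg m d n L = X.
Proof.
  intros Hm HX Hd.
  assert (G : forall j, (j <= L)%nat -> (Seg m d n j = X / m ^ (L - j))%nat).
  { induction j as [|j IH]; intros Hj.
    - simpl. rewrite Nat.sub_0_r. symmetry. apply Nat.div_small. auto.
    - simpl. rewrite IH by lia. rewrite Hd by lia. unfold encd.
      replace (L - j)%nat with (S (L - 1 - j)) by lia.
      replace (m ^ S (L - 1 - j))%nat with (m ^ (L - 1 - j) * m)%nat by (simpl; lia).
      rewrite <- Nat.Div0.div_div.
      replace (L - S j)%nat with (L - 1 - j)%nat by lia.
      symmetry. apply Nat.div_mod. lia. }
  rewrite G by lia. rewrite Nat.sub_diag. simpl. apply Nat.div_1_r.
Qed.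

Lemma pigeon (q : nat) (f : nat -> nat) : (forall i, (i <= q)%nat -> (f i < q)%nat) ->
  exists i j, (i < j <= q)%nat /\ f i = f j.
Proof.
  revert f. induction q as [|q IH]; intros f Hf.
  - specialize (Hf 0%nat ltac:(lia)). lia.
  - destruct (classic (exists i, (i <= q)%nat /\ f i = f (S q))) as [[i [Hi E]]|Hn].
    + exists i, (S q). split; auto. lia.
    + set (v := f (S q)).
      set (g := fun i => if Nat.ltb (f i) v then f i else (f i - 1)%nat).
      destruct (IH g) as [i [j [Hij E]]].
      { intros i Hi. unfold g. assert (f i <> v) by (intro; apply Hn; eauto).
        assert (v < S q)%nat by (apply Hf; lia). specialize (Hf i ltac:(lia)).
        destruct (Nat.ltb_spec (f i) v); lia. }
      exists i, j. split; [lia|]. unfold g in E.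
      assert (f i <> v) by (intro; apply Hn; exists i; split; [lia|auto]).
      assert (f j <> v) by (intro; apply Hn; exists j; split; [lia|auto]).
      destruct (Nat.ltb_spec (f i) v); destruct (Nat.ltb_spec (f j) v); lia.
Qed.

Definition cg (q a b : Z) : Prop := (q | a - b)%Z.

Lemma cg_refl q a : cg q a a.
Proof. exists 0%Z. ring. Qed.
Lemma cg_eq q a b : a = b -> cg q a b.
Proof. intros ->. apply cg_refl. Qed.
Lemma cg_sym q a b : cg q a b -> cg q b a.
Proof. intros [k Hk]. exists (-k)%Z. lia. Qed.
Lemma cg_trans q a b c : cg q a b -> cg q b c -> cg q a c.
Proof. intros [k Hk] [l Hl]. exists (k + l)%Z. lia. Qed.
Lemma cg_add q a b c d : cg q a b -> cg q c d -> cg q (a + c) (b + d).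
Proof. intros [k Hk] [l Hl]. exists (k + l)%Z. lia. Qed.
Lemma cg_mul q a b c d : cg q a b -> cg q c d -> cg q (a * c) (b * d).
Proof. intros [k Hk] [l Hl]. exists (k * c + b * l)%Z.
  replace (a * c - b * d)%Z with ((a - b) * c + b * (c - d))%Z by ring. rewrite Hk, Hl. ring. Qed.
Lemma cg_mod q a : (q <> 0)%Z -> cg q (a mod q) a.
Proof. intros Hq. exists (- (a / q))%Z. pose proof (Z_div_mod_eq_full a q). lia. Qed.
Lemma cg_mulq q a : cg q (q * a) 0.
Proof. exists a. ring. Qed.
Lemma cg_mod_eq q a b : (0 < q)%Z -> cg q a b -> (a mod q = b mod q)%Z.
Proof. intros Hq [k Hk]. replace a with (b + k * q)%Z by lia. rewrite Z.mod_add by lia. auto. Qed.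

Definition pw (m n : nat) : Z := Z.of_nat (m ^ n).
Lemma pw_add m a b : pw m (a + b) = (pw m a * pw m b)%Z.
Proof. unfold pw. rewrite Nat.pow_add_r, Nat2Z.inj_mul. auto. Qed.

Lemma idem_exists (m : nat) (q : Z) (B : nat) : (0 < q)%Z ->
  exists L, (B <= L)%nat /\ (1 <= L)%nat /\ cg q (pw m L * pw m L) (pw m L).
Proof.
  intros Hq.
  destruct (pigeon (Z.to_nat q) (fun i => Z.to_nat (pw m i mod q))) as [e [e' [He E]]].
  { intros i _. pose proof (Z.mod_pos_bound (pw m i) q Hq). lia. }
  assert (Ce : cg q (pw m e') (pw m e)).
  { apply cg_trans with (pw m e' mod q)%Z. apply cg_sym, cg_mod; lia.
    apply cg_trans with (pw m e mod q)%Z. 2: apply cg_mod; lia.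
    pose proof (Z.mod_pos_bound (pw m e) q Hq). pose proof (Z.mod_pos_bound (pw m e') q Hq).
    apply cg_eq. lia. }
  set (P := (e' - e)%nat).
  assert (C1 : forall n, (e <= n)%nat -> cg q (pw m (n + P)) (pw m n)).
  { intros n Hn. replace (n + P)%nat with ((n - e) + e')%nat by lia.
    replace n with ((n - e) + e)%nat at 2 by lia. rewrite !pw_add.
    apply cg_mul; [apply cg_refl | auto]. }
  assert (C2 : forall k n, (e <= n)%nat -> cg q (pw m (n + k * P)) (pw m n)).
  { induction k as [|k IH]; intros n Hn. rewrite Nat.add_0_r. apply cg_refl.
    replace (n + S k * P)%nat with ((n + k * P) + P)%nat by lia.
    eapply cg_trans. apply C1. lia. auto. }
  exists (P * (B + e + 1))%nat. split; [nia|]. split; [nia|].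
  rewrite <- pw_add. replace (P * (B + e + 1) + P * (B + e + 1))%nat
    with (P * (B + e + 1) + (B + e + 1) * P)%nat by lia.
  apply C2. nia.
Qed.

Lemma cg_idem q mu X Y K : cg q (mu * mu) mu -> (X - Y = (mu * mu - mu) * K)%Z -> cg q X Y.
Proof. intros [k Hk] E. exists (k * K)%Z. rewrite E, Hk. ring. Qed.

Lemma pw_pos m n : (1 <= m)%nat -> IZR (pw m n) = INR m ^ n.
Proof. intros. unfold pw. rewrite <- INR_IZR_INZ, pow_INR. auto. Qed.

Lemma Rabs_le_inv' x c : Rabs x <= c -> - c <= x <= c.
Proof. intros H. pose proof (Rle_abs x). pose proof (Rle_abs (-x)). rewrite Rabs_Ropp in H1. lra. Qed.

Lemma hit m d u a b p1 p2 q :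
  (2 <= m)%nat -> 0 <= a -> a < b -> b <= 1 -> madic_expansion m d u -> universal_seq m d ->
  (0 < q)%Z -> p2 <> 0%Z ->
  exists n, a < frac (INR m ^ n * (IZR p1 / IZR q + IZR p2 / IZR q * u)) < b.
Proof.
  intros Hm Ha Hab Hb He Hu Hq Hp2.
  assert (Hm1 : (1 <= m)%nat) by lia.
  set (v := (a + b) / 2). set (dl := (b - a) / 2).
  set (P := Rabs (IZR p2)).
  assert (HP : 0 < P) by (apply Rabs_pos_lt; apply not_0_IZR; auto).
  assert (Hqr : 1 <= IZR q) by (apply IZR_le; lia).
  set (U := up (P * (IZR q + 2) / dl)).
  assert (HU : P * (IZR q + 2) / dl < IZR U) by (apply archimed).
  assert (HU0 : (0 <= U)%Z).
  { apply le_IZR. assert (0 < P * (IZR q + 2) / dl) by (unfold dl; apply Rdiv_lt_0_compat; nra). lra. }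
  set (qn := Z.to_nat q).
  destruct (idem_exists m q (Z.to_nat U + 2 * qn) Hq) as [L [HLB [HL1 Hidem]]].
  set (mu := pw m L).
  assert (HmuL : (L < m ^ L)%nat) by (apply Nat.pow_gt_lin_r; lia).
  assert (Hmu2q : (2 * q <= mu)%Z) by (unfold mu, pw; lia).
  assert (HmuR : IZR mu = INR m ^ L) by (apply pw_pos; auto).
  assert (HmuU : P * (IZR q + 2) / dl < IZR mu).
  { apply Rlt_le_trans with (IZR U); auto. apply IZR_le. unfold mu, pw. lia. }
  assert (Hmu0 : 0 < IZR mu) by (rewrite HmuR; apply powm_pos; auto).
  set (Y := fun c : nat => (IZR q * v - INR c) / IZR p2).
  set (j := fun c => Int_part (Y c)).
  set (sg := fun c => Y c - IZR (j c)).
  assert (Hsg : forall c, 0 <= sg c < 1).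
  { intros c. unfold sg, j. destruct (base_Int_part (Y c)). lra. }
  set (W := fun c => ((1 - mu) * j c + mu)%Z).
  set (F := fun c => Int_part (sg c * IZR mu)).
  set (Xz := fun c => if (F c + q <=? mu)%Z then (F c + (W c - F c) mod q)%Z
                      else (F c - (F c - W c) mod q)%Z).
  assert (HX : forall c, (0 <= Xz c < mu)%Z /\ cg q (Xz c) (W c) /\
                 Rabs (IZR (Xz c) - sg c * IZR mu) <= IZR q + 1).
  { intros c. destruct (base_Int_part (sg c * IZR mu)) as [F1 F2]. fold (F c) in F1, F2.
    specialize (Hsg c).
    assert (HF0 : (0 <= F c)%Z).
    { assert (-1 < IZR (F c)) by nra. apply lt_IZR in H. lia. }
    assert (HFm : (F c < mu)%Z).
    { apply lt_IZR. nra. }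
    unfold Xz. destruct (Z.leb_spec (F c + q) mu).
    - pose proof (Z.mod_pos_bound (W c - F c) q Hq).
      split; [lia|]. split.
      + apply cg_trans with (F c + (W c - F c))%Z. apply cg_add. apply cg_refl. apply cg_mod; lia.
        apply cg_eq; ring.
      + assert (IZR ((W c - F c) mod q) < IZR q) by (apply IZR_lt; lia).
        assert (0 <= IZR ((W c - F c) mod q)) by (apply IZR_le; lia).
        rewrite plus_IZR. apply Rabs_le. lra.
    - pose proof (Z.mod_pos_bound (F c - W c) q Hq).
      split; [lia|]. split.
      + exists ((F c - W c) / q)%Z. pose proof (Z_div_mod_eq_full (F c - W c) q). lia.
      + assert (IZR ((F c - W c) mod q) < IZR q) by (apply IZR_lt; lia).
        assert (0 <= IZR ((F c - W c) mod q)) by (apply IZR_le; lia).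
        rewrite minus_IZR. apply Rabs_le. lra. }
  set (Xn := fun c => Z.to_nat (Xz c)).
  assert (HXn : forall c, Z.of_nat (Xn c) = Xz c).
  { intros c. unfold Xn. apply Z2Nat.id. apply HX. }
  assert (HXnL : forall c, (Xn c < m ^ L)%nat).
  { intros c. destruct (HX c) as [[H0 H1] _]. unfold Xn. unfold mu, pw in H1. lia. }
  set (g := fun i : nat => encd m L (Xn (i / L / (qn + 1))%nat) (i mod L)%nat).
  set (wd := map g (seq 0 (qn * (qn + 1) * L))).
  assert (Hqn : (1 <= qn)%nat) by (unfold qn; lia).
  destruct (Hu wd) as [k0 Hk0].
  { unfold wd. rewrite length_map, length_seq. nia. }
  { apply Forall_forall. intros x Hx. unfold wd in Hx. apply in_map_iff in Hx.
    destruct Hx as [i [<- _]]. unfold g, encd. apply Nat.mod_upper_bound. lia. }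
  assert (Dig : forall bb k, (bb < qn * (qn + 1))%nat -> (k < L)%nat ->
            d (k0 + bb * L + k)%nat = encd m L (Xn (bb / (qn + 1))%nat) k).
  { intros bb k Hbb Hk. rewrite <- Nat.add_assoc, Hk0.
    2: { unfold wd. rewrite length_map, length_seq. nia. }
    unfold wd. rewrite nth_indep with (d' := g 0%nat).
    2: { rewrite length_map, length_seq. nia. }
    rewrite map_nth, seq_nth by nia. simpl. unfold g.
    rewrite Nat.div_add_l by lia. rewrite (Nat.div_small k L) by lia. rewrite Nat.add_0_r.
    replace ((bb * L + k) mod L)%nat with k. auto. rewrite Nat.add_comm, Nat.Div0.mod_add. rewrite Nat.mod_small; lia. }
  assert (SegB : forall bb, (bb < qn * (qn + 1))%nat ->
            (Seg m d (k0 + bb * L) L = Xn (bb / (qn + 1)))%nat).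
  { intros bb Hbb. apply Seg_enc; [auto|auto|]. intros k Hk. apply Dig; auto. }
  set (A := fun bb => Z.of_nat (Nn m d (k0 + bb * L))).
  assert (Arec : forall bb, (bb < qn * (qn + 1))%nat ->
            A (S bb) = (A bb * mu + Xz (bb / (qn + 1))%nat)%Z).
  { intros bb Hbb. unfold A. replace (k0 + S bb * L)%nat with ((k0 + bb * L) + L)%nat by lia.
    rewrite Nn_Seg, SegB by auto. rewrite Nat2Z.inj_add, Nat2Z.inj_mul, HXn. auto. }
  assert (Hpow : forall k, (1 <= k)%nat -> cg q (pw m (k * L)) mu).
  { induction k as [|k IH]; intros Hk. lia.
    destruct (Nat.eq_dec k 0) as [->|Hk0'].
    - replace (1 * L)%nat with L by lia. apply cg_refl.
    - replace (S k * L)%nat with (k * L + L)%nat by lia. rewrite pw_add.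
      eapply cg_trans. apply cg_mul. apply IH; lia. apply cg_refl. exact Hidem. }
  set (kap := ((p1 * pw m k0 * mu) mod q)%Z).
  pose proof (Z.mod_pos_bound (p1 * pw m k0 * mu) q Hq) as Hkap.
  set (c0 := Z.to_nat kap).
  assert (Hc0 : (c0 < qn)%nat) by (unfold c0, qn, kap; lia).
  assert (Hc0z : Z.of_nat c0 = kap) by (unfold c0, kap; lia).
  set (base := (c0 * (qn + 1))%nat).
  assert (Grp : forall l, (1 <= l <= qn + 1)%nat ->
     cg q (A (base + l)%nat) (mu * (A base + Z.of_nat l) + (1 - mu) * j c0)%Z).
  { intros l Hl. induction l as [|l IH]. lia.
    assert (Hblk : ((base + l) / (qn + 1) = c0)%nat).
    { unfold base. rewrite Nat.div_add_l by lia. rewrite (Nat.div_small l) by lia. lia. }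
    replace (base + S l)%nat with (S (base + l)) by lia.
    rewrite Arec by (unfold base; nia). rewrite Hblk.
    destruct (HX c0) as [_ [HW _]].
    destruct (Nat.eq_dec l 0) as [->|Hl0].
    - rewrite Nat.add_0_r. eapply cg_trans. apply cg_add. apply cg_refl. exact HW.
      apply cg_eq. unfold W. change (Z.of_nat 1) with 1%Z. ring.
    - eapply cg_trans. apply cg_add. apply cg_mul. apply IH; lia. apply cg_refl. exact HW.
      apply (cg_idem q mu _ _ (A base + Z.of_nat l - j c0)%Z Hidem). unfold W. rewrite Nat2Z.inj_succ. ring. }
  set (r := ((j c0 - A base - 1) mod q)%Z).
  pose proof (Z.mod_pos_bound (j c0 - A base - 1) q Hq) as Hr.
  set (ls := (Z.to_nat r + 1)%nat).
  assert (Hls : (1 <= ls <= qn)%nat) by (unfold ls, qn, r; lia).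
  set (bs := (base + ls)%nat).
  assert (HAbs : cg q (A bs) (j c0)).
  { eapply cg_trans. apply Grp; lia.
    assert (E: Z.of_nat ls = (r + 1)%Z) by (unfold ls, r; lia).
    rewrite E.
    assert (H : cg q (A base + (r + 1)) (j c0)).
    { eapply cg_trans. apply cg_add. apply cg_refl. apply cg_add. unfold r. apply cg_mod. lia. apply cg_refl.
      apply cg_eq; ring. }
    eapply cg_trans. apply cg_add. apply cg_mul. apply cg_refl. exact H. apply cg_refl. apply cg_eq; ring. }
  set (n := (k0 + bs * L)%nat).
  assert (Hkn : cg q (p1 * pw m n + p2 * A bs) (Z.of_nat c0 + p2 * j c0)%Z).
  { apply cg_add. 2: { apply cg_mul. apply cg_refl. exact HAbs. }
    rewrite Hc0z. unfold n. rewrite pw_add. eapply cg_trans. 2: { apply cg_sym. unfold kap. apply cg_mod. lia. }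
    replace (p1 * pw m k0 * mu)%Z with (p1 * (pw m k0 * mu))%Z by ring.
    apply cg_mul. apply cg_refl. apply cg_mul. apply cg_refl. apply Hpow. unfold bs; lia. }
  destruct Hkn as [K HK].
  assert (Hbs : (bs < qn * (qn + 1))%nat) by (unfold bs, base; nia).
  assert (HSeg : Seg m d n L = Xn c0).
  { unfold n. rewrite SegB by auto. f_equal. unfold bs, base.
    rewrite Nat.div_add_l by lia. rewrite (Nat.div_small ls) by lia. lia. }
  pose proof (block_bound m d u n L Hm1 He) as BB.
  rewrite HSeg, INR_IZR_INZ, HXn, <- HmuR in BB.
  set (s := INR m ^ n * u - INR (Nn m d n)) in BB.
  destruct (HX c0) as [_ [_ HXe]].
  assert (He1 : Rabs (s - sg c0) <= (IZR q + 2) / IZR mu).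
  { apply Rabs_le_inv' in HXe. destruct BB as [B1 B2]. destruct HXe as [X1 X2].
    apply Rabs_le. split.
    - assert (IZR (Xz c0) / IZR mu - sg c0 >= - (IZR q + 2) / IZR mu).
      { apply Rle_ge. apply (Rmult_le_reg_l (IZR mu)); auto. field_simplify; lra. }
      lra.
    - assert ((IZR (Xz c0) + 1) / IZR mu - sg c0 <= (IZR q + 2) / IZR mu).
      { apply (Rmult_le_reg_l (IZR mu)); auto. field_simplify; lra. }
      lra. }
  set (w := v + IZR p2 * (s - sg c0) / IZR q).
  assert (Hw : Rabs (IZR p2 * (s - sg c0) / IZR q) < dl).
  { unfold Rdiv. rewrite !Rabs_mult. fold P. rewrite Rabs_inv, (Rabs_right (IZR q)) by lra.
    assert (0 < / IZR q <= 1).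
    { split. apply Rinv_0_lt_compat; lra. rewrite <- Rinv_1. apply Rinv_le_contravar; lra. }
    assert (0 <= Rabs (s - sg c0)) by apply Rabs_pos.
    assert (P * Rabs (s - sg c0) < dl).
    { apply Rle_lt_trans with (P * ((IZR q + 2) / IZR mu)). apply Rmult_le_compat_l; lra.
      assert (Hdl : 0 < dl) by (unfold dl; lra).
      apply (Rmult_lt_reg_r (IZR mu)); auto. unfold Rdiv. 
      replace (P * ((IZR q + 2) * / IZR mu) * IZR mu) with (P * (IZR q + 2)) by (field; lra).
      apply (Rmult_lt_reg_r (/ dl)). apply Rinv_0_lt_compat; auto.
      replace (dl * IZR mu * / dl) with (IZR mu) by (field; lra). exact HmuU. }
    assert (0 <= P * Rabs (s - sg c0)) by (apply Rmult_le_pos; lra). apply Rle_lt_trans with (P * Rabs (s - sg c0) * 1); [apply Rmult_le_compat_l; lra | lra]. }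
  exists n.
  assert (Eq : INR m ^ n * (IZR p1 / IZR q + IZR p2 / IZR q * u) = IZR K + w).
  { assert (HKr := f_equal IZR HK).
    rewrite minus_IZR, !plus_IZR, !mult_IZR in HKr.
    assert (E0 : IZR (A bs) = INR (Nn m d n)) by (unfold A, n; rewrite INR_IZR_INZ; auto).
    rewrite E0, pw_pos, <- INR_IZR_INZ in HKr by auto.
    assert (HY : IZR p2 * (sg c0 + IZR (j c0)) = IZR q * v - INR c0).
    { unfold sg, Y. field. apply not_0_IZR; auto. }
    assert (E1 : IZR p1 * INR m ^ n = IZR K * IZR q + INR c0 + IZR p2 * IZR (j c0) - IZR p2 * INR (Nn m d n)) by lra.
    assert (E2 : IZR p2 * IZR (j c0) = IZR q * v - INR c0 - IZR p2 * sg c0) by lra.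
    replace (INR m ^ n * (IZR p1 / IZR q + IZR p2 / IZR q * u)) with
      ((IZR p1 * INR m ^ n + IZR p2 * (INR m ^ n * u)) / IZR q) by (field; lra).
    rewrite E1, E2. unfold w, s. field. lra. }
  rewrite Eq, frac_small.
  - apply Rabs_def2 in Hw. unfold w, v, dl in *. lra.
  - apply Rabs_def2 in Hw. unfold w, v, dl in *. lra.
Qed.

Lemma rat_pos r : rational r -> exists p q, (0 < q)%Z /\ r = IZR p / IZR q.
Proof.
  intros [p [q [Hq E]]]. destruct (Z_lt_le_dec 0 q) as [H|H].
  - exists p, q. auto.
  - exists (-p)%Z, (-q)%Z. split; [lia|]. rewrite E, !opp_IZR. field.
    apply not_0_IZR. auto.
Qed.

Lemma key m a b x u p1 p2 q : (2 <= m)%nat -> 0 <= a -> a < b -> b <= 1 ->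
  survivor m a b x -> has_universal_expansion m u -> (0 < q)%Z -> p2 <> 0%Z ->
  x = IZR p1 / IZR q + IZR p2 / IZR q * u -> False.
Proof.
  intros Hm Ha Hab Hb [Hx Hs] [d [He Hu]] Hq Hp2 Ex.
  destruct (hit m d u a b p1 p2 q Hm Ha Hab Hb He Hu Hq Hp2) as [n Hn].
  apply (Hs n). rewrite iter_frac by auto. rewrite Ex. auto.
Qed.

Theorem corollary2 (m : nat) (a b : R) :
  (2 <= m)%nat -> 0 <= a -> a < b -> b <= 1 ->
  (forall t : R, 0 < t < 1 -> has_universal_expansion m t ->
     forall x : R, survivor m a b x ->
       irrational (x - t) /\ irrational (x + t) /\ (x <> 0 -> irrational (x / t))) /\
  (forall t : R, 1 < t -> has_universal_expansion m (/ t) ->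
     forall x : R, survivor m a b x -> x <> 0 -> irrational (t * x)).
Proof.
  intros Hm Ha Hab Hb. split.
  - intros t Ht HU x Hs. split; [|split].
    + intros Hr. apply rat_pos in Hr as [p [q [Hq E]]].
      assert (Hq0 : IZR q <> 0) by (apply not_0_IZR; lia).
      apply (key m a b x t p q q Hm Ha Hab Hb Hs HU Hq ltac:(lia)).
      replace x with ((x - t) + t) by ring. rewrite E. field. auto.
    + intros Hr. apply rat_pos in Hr as [p [q [Hq E]]].
      assert (Hq0 : IZR q <> 0) by (apply not_0_IZR; lia).
      apply (key m a b x t p (-q) q Hm Ha Hab Hb Hs HU Hq ltac:(lia)).
      replace x with ((x + t) - t) by ring. rewrite E, opp_IZR. field. auto.
    + intros Hx0 Hr. apply rat_pos in Hr as [p [q [Hq E]]].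
      assert (Hq0 : IZR q <> 0) by (apply not_0_IZR; lia).
      assert (Hp : p <> 0%Z).
      { intros ->. apply Hx0. replace x with ((x / t) * t) by (field; lra).
        rewrite E. unfold Rdiv. ring. }
      apply (key m a b x t 0 p q Hm Ha Hab Hb Hs HU Hq Hp).
      replace x with ((x / t) * t) by (field; lra). rewrite E. field. auto.
  - intros t Ht HU x Hs Hx0 Hr. apply rat_pos in Hr as [p [q [Hq E]]].
    assert (Hq0 : IZR q <> 0) by (apply not_0_IZR; lia).
    assert (Hp : p <> 0%Z).
    { intros ->. apply Hx0. replace x with ((t * x) / t) by (field; lra).
      rewrite E. unfold Rdiv. ring. }
    apply (key m a b x (/ t) 0 p q Hm Ha Hab Hb Hs HU Hq Hp).
    replace x with ((t * x) / t) by (field; lra). rewrite E. field. split; auto; lra.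
Qed.
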